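(* Let $E$ be a Banach space and let $\mathscr{S}_1,\dots,\mathscr{S}_n\subseteq\mathcal{L}(E)$ be mean ergodic operator semigroups such that $ST=TS$ whenever $T\in\mathscr{S}_i$, $S\in\mathscr{S}_j$ with $i\neq j$. Then $$\ker(\mathscr{S}_1-\mathrm{Id})\cdots(\mathscr{S}_n-\mathrm{Id})=\ker(\mathscr{S}_1-\mathrm{Id})+\cdots+\ker(\mathscr{S}_n-\mathrm{Id}).$$
   Context: $\mathcal{L}(E)$ denotes the bounded linear operators on $E$. A semigroup $\mathscr{S}\subseteq\mathcal{L}(E)$ is mean ergodic if the closure (in the strong operator topology) of its convex hull contains a zero element $P$, i.e. $PT=P=TP$ for all $T\in\mathscr{S}$. For a set $\mathscr{A}\subseteq\mathcal{L}(E)$, $\ker\mathscr{A}=\bigcap_{A\in\mathscr{A}}\ker A$; here $\ker(\mathscr{S}_j-\mathrm{Id})=\bigcap_{S\in\mathscr{S}_j}\ker(S-\mathrm{Id})$, and $\ker(\mathscr{S}_1-\mathrm{Id})\cdots(\mathscr{S}_n-\mathrm{Id})$ is the intersection of $\ker\big((S_1-\mathrm{Id})\cdots(S_n-\mathrm{Id})\big)$ over all choices $S_j\in\mathscr{S}_j$. *)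

(* Defs.v *)
From HB Require Import structures.
From mathcomp Require Import all_boot all_order all_algebra.
From mathcomp Require Import all_classical all_reals all_analysis.
Set Implicit Arguments. Unset Strict Implicit. Unset Printing Implicit Defensive.
Import Order.TTheory GRing.Theory Num.Theory.
Import numFieldNormedType.Exports.
Local Open Scope classical_set_scope.
Local Open Scope ring_scope.

(* Scalars K : numFieldType (covers R and C); E a Banach space over K. *)
Section Defs.
Variables (K : numFieldType) (E : completeNormedModType K).

Definition bounded_op (T : E -> E) : Prop := linear T /\ continuous T.

Definition op_semigroup (S : set (E -> E)) : Prop :=
  S `<=` bounded_op /\ forall T U, S T -> S U -> S (T \o U).

Definition conv_hull (S : set (E -> E)) : set (E -> E) :=
  [set A | exists (m : nat) (lam : 'I_m -> K) (Ts : 'I_m -> E -> E),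
     [/\ forall k, 0 <= lam k, \sum_(k < m) lam k = 1, forall k, S (Ts k)
       & forall x, A x = \sum_(k < m) lam k *: Ts k x]].

(* P ∈ L(E) lies in the strong-operator-topology closure of C *)
Definition sot_closure (C : set (E -> E)) : set (E -> E) :=
  [set P | bounded_op P /\
     forall (m : nat) (xs : 'I_m -> E) (e : K), 0 < e ->
       exists2 A, C A & forall k, `|A (xs k) - P (xs k)| < e].

Definition zero_elt (S : set (E -> E)) (P : E -> E) : Prop :=
  forall T, S T -> P \o T = P /\ T \o P = P.

Definition mean_ergodic (S : set (E -> E)) : Prop :=
  exists2 P, sot_closure (conv_hull S) P & zero_elt S P.

Definition fix_space (S : set (E -> E)) : set E :=
  [set x | forall T, S T -> T x = x].

Definition prod_minus_id (n : nat) (f : 'I_n -> E -> E) : E -> E :=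
  foldr (fun i g => (fun x => f i x - x) \o g) id (enum 'I_n).

Definition ker_prod (n : nat) (Ss : 'I_n -> set (E -> E)) : set E :=
  [set x | forall f : 'I_n -> E -> E, (forall j, Ss j (f j)) ->
             prod_minus_id f x = 0].

Definition sum_fix (n : nat) (Ss : 'I_n -> set (E -> E)) : set E :=
  [set x | exists2 y : 'I_n -> E, (forall j, fix_space (Ss j) (y j)) &
             x = \sum_(j < n) y j].
End Defs.

(* Main.v *)
Require Import Defs.
From HB Require Import structures.
From mathcomp Require Import all_boot all_order all_algebra.
From mathcomp Require Import all_classical all_reals all_analysis.
Import Order.TTheory GRing.Theory Num.Theory.
Import numFieldNormedType.Exports.
Local Open Scope classical_set_scope.
Local Open Scope ring_scope.

Section Helpers.
Variables (K : numFieldType) (E : completeNormedModType K).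

Lemma lin0 (T : E -> E) : linear T -> T 0 = 0.
Proof. by move=> H; have := H (-1) 0 0; rewrite scaler0 addr0 scaleN1r addNr. Qed.

Lemma linB (T : E -> E) : linear T -> forall u v, T (u - v) = T u - T v.
Proof.
by move=> H u v; have := H (-1) v u; rewrite !scaleN1r [- v + u]addrC => ->; rewrite addrC.
Qed.

Lemma linD (T : E -> E) : linear T -> forall u v, T (u + v) = T u + T v.
Proof. by move=> H u v; have := H 1 u v; rewrite !scale1r. Qed.

Lemma linZ (T : E -> E) : linear T -> forall a u, T (a *: u) = a *: T u.
Proof. by move=> H a u; have := H a u 0; rewrite !addr0 lin0 // addr0. Qed.

Lemma linS (T : E -> E) : linear T -> forall m (g : 'I_m -> E),
  T (\sum_(k < m) g k) = \sum_(k < m) T (g k).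
Proof.
move=> H m g; apply: (big_ind2 (fun a b => T a = b)) => //.
- exact: lin0.
- by move=> a b c d <- <-; rewrite linD.
Qed.

Variable n : nat.

Definition prodL (f : 'I_n -> E -> E) (s : seq 'I_n) : E -> E :=
  foldr (fun i g => (fun x => f i x - x) \o g) id s.

Lemma prodL_lin f s : (forall i, linear (f i)) -> linear (prodL f s).
Proof.
move=> Hf; elim: s => [//|i s IH] a u v /=.
by rewrite IH Hf scalerBr opprD addrACA.
Qed.

Lemma prodL_eq f g s : (forall i, i \in s -> f i = g i) ->
  forall x, prodL f s x = prodL g s x.
Proof.
elim: s => [//|i s IH] H x /=.
rewrite IH; last by move=> j js; apply: H; rewrite inE js orbT.
by rewrite H // inE eqxx.
Qed.

Lemma prodL_comm f s (T : E -> E) : linear T ->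
  (forall i, i \in s -> T \o f i = f i \o T) ->
  forall x, T (prodL f s x) = prodL f s (T x).
Proof.
move=> HT; elim: s => [//|i s IH] H x /=.
rewrite linB // -IH; last by move=> j js; apply: H; rewrite inE js orbT.
have := H i; rewrite inE eqxx => /(_ isT) /(congr1 (fun h => h (prodL f s x))).
by move=> /= ->.
Qed.

Lemma prodL_fix f s j y : (forall i, linear (f i)) -> uniq s -> j \in s ->
  (forall i, i \in s -> i != j -> f j \o f i = f i \o f j) ->
  f j y = y -> prodL f s y = 0.
Proof.
move=> Hf; elim: s => [//|k s IH] /= /andP[ks us] js Hc fy.
case: (eqVneq k j) => [ekj|nkj].
  subst k; rewrite (@prodL_comm f s (f j)) ?fy ?subrr //.
  move=> i is_; apply: Hc; first by rewrite inE is_ orbT.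
  by apply/eqP => eij; subst i; rewrite is_ in ks.
rewrite IH //; first by rewrite lin0 // subrr.
  by move: js; rewrite inE eq_sym (negbTE nkj).
by move=> i is_ nij; apply: Hc => //; rewrite inE is_ orbT.
Qed.

Lemma approx (S : set (E -> E)) (P L : E -> E) y :
  linear L -> continuous L -> sot_closure (conv_hull S) P ->
  (forall T, S T -> L (T y - y) = 0) -> L (P y - y) = 0.
Proof.
move=> HL HLc [_ HP] HT.
have Hconv : forall A, conv_hull S A -> L (A y - y) = 0.
  move=> A [m [lam [Ts [_ Hs HTs HA]]]].
  have -> : A y - y = \sum_(k < m) lam k *: (Ts k y - y).
    rewrite HA -[X in _ - X]scale1r -Hs scaler_suml -sumrB.
    by apply: eq_bigr => k _; rewrite scalerBr.
  rewrite linS //; apply: big1 => k _.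
  by rewrite linZ // HT // scaler0.
apply/eqP; apply/negP => /negP Hne.
have he : 0 < `|L (P y - y)| by rewrite normr_gt0.
move: (HLc (P y - y)) => /cvgr_dist_lt /(_ _ he).
move/nbhs_normP => [d d0 Hd].
have [A HA HAd] := HP 1%N (fun _ => y) d d0.
have := Hd (A y - y).
rewrite /= opprB addrA subrK -opprB normrN => /(_ (HAd ord0)).
by rewrite (Hconv A HA) subr0 ltxx.
Qed.

Lemma key (Ss : 'I_n -> set (E -> E)) (P : 'I_n -> E -> E) x :
  (forall j, sot_closure (conv_hull (Ss j)) (P j)) ->
  (exists f0 : 'I_n -> E -> E, forall j, Ss j (f0 j)) ->
  forall s, uniq s -> forall L : E -> E, linear L -> continuous L ->
  (forall f, (forall j, Ss j (f j)) -> L (prodL f s x) = 0) ->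
  L (prodL P s x) = 0.
Proof.
move=> HP [f0 Hf0]; elim=> [|k s IH] /=.
  by move=> _ L _ _ H; apply: (H f0 Hf0).
move=> /andP[ks us] L HL HLc H.
have [[HPl HPc] _] := HP k.
apply: (IH us (fun v => L (P k v - v))).
- by move=> a u v /=; rewrite HPl -HL scalerBr opprD addrACA.
- move=> v; apply: (@continuous_comp _ _ _ (fun v => P k v - v) L v).
    by apply: cvgB; [exact: HPc | exact: cvg_id].
  exact: HLc.
- move=> f Hf /=; apply: (@approx (Ss k) (P k) L) => // T HT.
  have Heq : prodL (fun i => if i == k then T else f i) s x = prodL f s x.
    apply: prodL_eq => i is_; case: eqP => // eik; subst i.
    by rewrite is_ in ks.
  have := H (fun i => if i == k then T else f i).
  rewrite /= eqxx Heq; apply => j; case: eqP => [->|] //.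
Qed.

Lemma decomp (Ss : 'I_n -> set (E -> E)) (P : 'I_n -> E -> E) x :
  (forall j, op_semigroup (Ss j)) -> (forall j, zero_elt (Ss j) (P j)) ->
  forall s, exists2 y : 'I_n -> E, (forall j, fix_space (Ss j) (y j)) &
    x = \sum_(j < n) y j + (-1) ^+ size s *: prodL P s x.
Proof.
move=> Hsg HPz.
have linT j T : Ss j T -> linear T by move=> h; exact: ((Hsg j).1 T h).1.
elim=> [|k s [y Hy Hx]] /=.
  exists (fun _ => 0); first by move=> j T HT; rewrite lin0 //; exact: (linT j).
  by rewrite big1 // add0r expr0 scale1r.
set z := prodL P s x.
exists (fun j => y j + (if j == k then (-1) ^+ size s *: P k z else 0)).
  move=> j T HT /=; have lT := linT j T HT.
  rewrite linD // Hy //.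
  case: eqP => [ejk|_]; last by rewrite lin0.
  subst j; rewrite linZ //.
  by have [_ HTP] := HPz k T HT; rewrite -{2}HTP.
have Hs : \sum_(j < n) (if j == k then (-1) ^+ size s *: P k z else 0)
    = (-1) ^+ size s *: P k z.
  by rewrite (bigD1 k) //= eqxx big1 ?addr0 // => j /negbTE ->.
rewrite big_split /= Hs.
rewrite {1}Hx exprS mulN1r scaleNr scalerBr opprB -addrA.
by congr (_ + _); rewrite addrC subrK.
Qed.

End Helpers.

Theorem theorem1p3 (K : numFieldType) (E : completeNormedModType K)
    (n : nat) (Ss : 'I_n -> set (E -> E)) :
  (forall j, op_semigroup (Ss j)) ->
  (forall j, mean_ergodic (Ss j)) ->
  (forall i j : 'I_n, i != j -> forall T S, Ss i T -> Ss j S -> S \o T = T \o S) ->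
  ker_prod Ss = sum_fix Ss.
Proof.
move=> Hsg Hme Hc.
have linT j T : Ss j T -> linear T by move=> h; exact: ((Hsg j).1 T h).1.
have /choice [P HP] : forall j, exists P : E -> E,
    sot_closure (conv_hull (Ss j)) P /\ zero_elt (Ss j) P.
  by move=> j; have [P H1 H2] := Hme j; exists P.
have Hf0 : exists f0 : 'I_n -> E -> E, forall j, Ss j (f0 j).
  have /choice [f0 Hf0] : forall j, exists T, Ss j T.
    move=> j; have [[_ HPc] _] := HP j.
    have [A [m [lam [Ts [_ Hs HTs _]]]] _] := HPc 0%N (fun _ => 0) 1 ltr01.
    case: m lam Ts Hs HTs => [|m] lam Ts Hs HTs.
      by move: Hs; rewrite big_ord0 => /esym/eqP; rewrite oner_eq0.
    by exists (Ts ord0).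
  by exists f0.
apply/seteqP; split => x Hx.
- have Hz : @prodL K E n P (enum 'I_n) x = 0.
    apply: (@key K E n Ss P x (fun j => (HP j).1) Hf0 _ (enum_uniq _) id).
    + by move=> a u v.
    + by move=> v; exact: cvg_id.
    + by move=> f Hf; exact: Hx f Hf.
  have [y Hy Hxy] := @decomp K E n Ss P x Hsg (fun j => (HP j).2) (enum 'I_n).
  by exists y => //; rewrite {1}Hxy Hz scaler0 addr0.
- case: Hx => y Hy ->; move=> f Hf.
  have lf : forall i, linear (f i) by move=> i; exact: (linT i).
  change (@prodL K E n f (enum 'I_n) (\sum_(j < n) y j) = 0).
  rewrite linS; last exact: prodL_lin.
  apply: big1 => j _; apply: (@prodL_fix K E n f _ j) => //.
  + exact: enum_uniq.
  + by rewrite mem_enum.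
  + by move=> i _ nij; exact: Hc nij (f i) (f j) (Hf i) (Hf j).
  + exact: Hy (f j) (Hf j).
Qed.
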